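(* Let $X$ be a metric space and let $F: X \Rightarrow \mathbb{R}^m$ be a (total) multi-valued function such that $F(x)$ is closed for every $x \in X$. Then: (a) the set of points of continuity of $F$ is a $\Sigma^0_3$ subset of $X$; (b) if moreover $F(x)$ is bounded for every $x\in X$, then the set of points of continuity of $F$ is a $\Pi^0_2$ subset of $X$.
   Context: A multi-valued function $F: X \Rightarrow Y$ assigns to each $x$ a set $F(x)\subseteq Y$; all multi-valued functions are total ($F(x)\ne\emptyset$). For metric spaces $(X,p),(Y,d)$, $F$ is continuous at $x$ if there is some $y \in F(x)$ such that for every $\varepsilon>0$ there is $\delta>0$ such that for every $x' \in B_p(x,\delta)$ there is $y' \in F(x')$ with $d(y,y')<\varepsilon$. $\mathbb{R}^m$ carries its usual metric. Borel hierarchy: $\Sigma^0_1$ = open; $\Sigma^0_{n+1}$ = countable unions of sets whose complements are $\Sigma^0_k$ for some $k\le n$; $\Pi^0_n$ = complements of $\Sigma^0_n$ sets ($\Pi^0_2 = G_\delta$, $\Sigma^0_3$ = countable unions of $G_\delta$ sets). *)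

(* Defs.v *)
From HB Require Import structures.
From mathcomp Require Import all_boot all_order all_algebra.
From mathcomp Require Import boolp classical_sets reals.
Set Implicit Arguments. Unset Strict Implicit. Unset Printing Implicit Defensive.
Import Order.TTheory GRing.Theory Num.Theory.
Local Open Scope ring_scope.
Local Open Scope classical_set_scope.

Section Defs.
Variable R : realType.

Definition is_metric (X : Type) (d : X -> X -> R) : Prop :=
  (forall x y, 0 <= d x y) /\
  (forall x y, d x y = 0 <-> x = y) /\
  (forall x y, d x y = d y x) /\
  (forall x y z, d x z <= d x y + d y z).

Definition mball (X : Type) (d : X -> X -> R) (x : X) (r : R) : set X :=
  [set y | d x y < r].

Definition mopen (X : Type) (d : X -> X -> R) (A : set X) : Prop :=
  forall x, A x -> exists2 r : R, 0 < r & mball d x r `<=` A.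

Definition mclosed (X : Type) (d : X -> X -> R) (A : set X) : Prop :=
  mopen d (~` A).

Definition mbounded (X : Type) (d : X -> X -> R) (A : set X) : Prop :=
  exists x0 : X, exists M : R, forall y, A y -> d x0 y <= M.

Definition euclid (m : nat) (u v : 'rV[R]_m) : R :=
  Num.sqrt (\sum_(i < m) (u ord0 i - v ord0 i) ^+ 2).

(** Borel hierarchy: [Sigma0 d n A] means A is Sigma^0_n (n >= 1). *)
Inductive Sigma0 (X : Type) (d : X -> X -> R) : nat -> set X -> Prop :=
| Sigma0_open (A : set X) : mopen d A -> Sigma0 d 1 A
| Sigma0_succ (n : nat) (A : set X) (B : nat -> set X) :
    (1 <= n)%N ->
    A = \bigcup_(i in [set: nat]) B i ->
    (forall i, exists k : nat, [/\ (1 <= k)%N, (k <= n)%N & Sigma0 d k (~` B i)]) ->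
    Sigma0 d n.+1 A.

Definition Pi0 (X : Type) (d : X -> X -> R) (n : nat) (A : set X) : Prop :=
  Sigma0 d n (~` A).

Definition mv_continuous_at (X Y : Type) (p : X -> X -> R) (dY : Y -> Y -> R)
  (F : X -> set Y) (x : X) : Prop :=
  exists2 y : Y, F x y &
    forall eps : R, 0 < eps -> exists2 delta : R, 0 < delta &
      forall x', p x x' < delta -> exists2 y' : Y, F x' y' & dY y y' < eps.

End Defs.

(* Main.v *)
Require Import Defs.
From HB Require Import structures.
From mathcomp Require Import all_boot all_order all_algebra.
From mathcomp Require Import all_classical all_reals all_analysis.
From mathcomp Require Import zify ring.
From Stdlib Require Import Lia.
Import Order.TTheory GRing.Theory Num.Theory.
Import numFieldNormedType.Exports.
Local Open Scope ring_scope.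
Local Open Scope classical_set_scope.

Lemma arch_inv (R : realType) (c : R) : 0 < c -> exists n : nat, n.+1%:R^-1 < c.
Proof.
move=> c0; have c1 : 0 <= c^-1 by rewrite invr_ge0 ltW.
have := archi_boundP c1.
set n := Num.Def.archi_bound _ => H; exists n.
rewrite -(invrK c) ltf_pV2 ?posrE ?invr_gt0 //.
by apply: (lt_le_trans H); rewrite ler_nat.
Qed.

Lemma euclid_coord (R : realType) m (u v : 'rV[R]_m) i :
  `|u ord0 i - v ord0 i| <= euclid u v.
Proof.
rewrite /euclid -sqrtr_sqr ler_sqrt; last first.
  by apply: sumr_ge0 => j _; apply: sqr_ge0.
rewrite (bigD1 i) //= lerDl; apply: sumr_ge0 => j _; apply: sqr_ge0.
Qed.

Lemma euclid_small (R : realType) m (u v : 'rV[R]_m) t eps :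
  0 <= t -> (forall i, `|u ord0 i - v ord0 i| <= t) -> t * (m.+1)%:R < eps ->
  euclid u v < eps.
Proof.
move=> t0 H Heps.
have eps0 : 0 < eps by apply: le_lt_trans Heps; apply: mulr_ge0.
rewrite /euclid -(ger0_norm (ltW eps0)) -sqrtr_sqr ltr_sqrt ?exprn_gt0 //.
apply: (@le_lt_trans _ _ (\sum_(i < m) t ^+ 2)).
  apply: ler_sum => i _; rewrite -real_normK ?num_real //.
  by rewrite lerXn2r ?nnegrE ?normr_ge0.
rewrite sumr_const card_ord -mulr_natr.
apply: (@le_lt_trans _ _ ((t * m.+1%:R) ^+ 2)).
  rewrite exprMn ler_wpM2l ?sqr_ge0 //.
  rewrite -natrX ler_nat; nia.
rewrite ltr_pXn2r ?nnegrE //; first by apply: mulr_ge0.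
exact: ltW.
Qed.
Arguments arch_inv {R} c.
Arguments euclid_coord {R m} u v i.
Arguments euclid_small {R m} u v t eps.

Definition IU (R : realType) (X : Type) (p : X -> X -> R) (m : nat)
  (F : X -> set 'rV[R]_m) (y : 'rV[R]_m) (r : R) (x : X) : Prop :=
  exists2 d : R, 0 < d & forall x', p x x' < d -> exists2 w, F x' w & euclid y w < r.
Arguments IU {R X} p {m} F y r x.

Lemma IU_mono (R : realType) (X : Type) (p : X -> X -> R) (m : nat)
  (F : X -> set 'rV[R]_m) y r r' x : r <= r' -> IU p F y r x -> IU p F y r' x.
Proof.
move=> rr [d d0 H]; exists d => // x' /H [w Fw yw]; exists w => //.
exact: lt_le_trans rr.
Qed.

Lemma key (R : realType) (X : Type) (p : X -> X -> R) (m : nat)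
  (F : X -> set 'rV[R]_m) :
  is_metric p -> (forall x, mclosed (@euclid R m) (F x)) ->
  forall x (lo hi : 'I_m -> R),
  (forall n : nat, exists2 y : 'rV[R]_m, (forall i, lo i <= y ord0 i <= hi i) &
     IU p F y (n.+1%:R^-1) x) ->
  mv_continuous_at p (@euclid R m) F x.
Proof.
move=> [_ [pE _]] clF x lo hi H.
pose box := [set v : 'rV[R]_m | forall i, `[lo i, hi i]%classic (v ord0 i)].
have cbox : compact box.
  by apply: (@rV_compact _ _ (fun i => `[lo i, hi i]%classic)) => i; apply: segment_compact.
pose S n := [set y | box y /\ IU p F y (n.+1%:R^-1) x].
have mono : forall n k, (n <= k)%N -> S k `<=` S n.
  move=> n k nk y [by1 IUy]; split => //; apply: IU_mono IUy.
  by rewrite lef_pV2 ?posrE // ler_nat.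
have FF : ProperFilter (filter_from setT S).
  apply: filter_from_proper.
    apply: filter_fromT_filter; first by exists 0%N.
    move=> i j; exists (maxn i j) => y Sy; split.
      by apply: (mono i (maxn i j)) => //; rewrite leq_maxl.
    by apply: (mono j (maxn i j)) => //; rewrite leq_maxr.
  move=> i _; have [y by1 IUy] := H i; exists y; split => //.
have [|y [boxy cly]] := cbox _ FF.
  by exists 0%N => // y [].
have P : forall eps : R, 0 < eps -> exists2 delta : R, 0 < delta &
      forall x', p x x' < delta -> exists2 y' : 'rV[R]_m, F x' y' & euclid y y' < eps.
  move=> eps e0.
  pose c := eps / 4%:R / m.+1%:R.
  have c0 : 0 < c by rewrite /c !divr_gt0 // ltr0n.
  have [n Hn] := arch_inv c c0.
  have [z [[_ [d d0 Hd]] byz]] := cly (S n) (ball y c) (ex_intro2 _ _ n I (fun _ h => h))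
     (nbhsx_ballx y c c0).
  exists d => // x' /Hd [w Fw zw]; exists w => //.
  apply: (euclid_small _ _ (c + c)).
  - by rewrite addr_ge0 // ltW.
  - move=> i.
    have h1 : `|y ord0 i - z ord0 i| < c.
      by move: byz => [_ /(_ ord0 i)]; rewrite /ball /=.
    have h2 : `|z ord0 i - w ord0 i| < c.
      exact: le_lt_trans (euclid_coord z w i) (lt_trans zw Hn).
    have -> : y ord0 i - w ord0 i = (y ord0 i - z ord0 i) + (z ord0 i - w ord0 i).
      by rewrite addrA subrK.
    apply: le_trans (ler_normD _ _) _.
    by rewrite lerD // ltW.
  - have -> : (c + c) * m.+1%:R = eps / 2.
      rewrite /c; field.
      all: rewrite ?nat1r ?pnatr_eq0 //.
    by rewrite ltr_pdivrMr // ltr_pMr // ltr1n.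
exists y; last exact: P.
apply: contrapT => nF.
have [r r0 Hr] := clF x y nF.
have [d d0 Hd] := P r r0.
have [w Fw yw] := Hd x ltac:(by rewrite (proj2 (pE x x) erefl)).
exact: (Hr w yw Fw).
Qed.

Arguments key {R X p m F}.

Lemma O_open (R : realType) (X : Type) (p : X -> X -> R) (m : nat)
  (F : X -> set 'rV[R]_m) (Q : 'rV[R]_m -> Prop) (r : R) :
  is_metric p -> mopen p [set x | exists2 y, Q y & IU p F y r x].
Proof.
move=> [p0 [_ [_ ptri]]] x [y Qy [d d0 Hd]].
exists d => // x'' /= xx''; exists y => //.
exists (d - p x x''); first by rewrite subr_gt0.
move=> z x''z; apply: Hd.
apply: le_lt_trans (ptri x x'' z) _.
by rewrite -ltrBrDl.
Qed.

Arguments O_open {R X p m F Q r}.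

Lemma cont_IU (R : realType) (X : Type) (p : X -> X -> R) (m : nat)
  (F : X -> set 'rV[R]_m) x y :
  F x y -> (forall eps : R, 0 < eps -> exists2 delta : R, 0 < delta &
      forall x', p x x' < delta -> exists2 y' : 'rV[R]_m, F x' y' & euclid y y' < eps) ->
  forall n : nat, IU p F y (n.+1%:R^-1) x.
Proof. by move=> _ H n; apply: H. Qed.

Arguments cont_IU {R X p m F x y}.

Theorem corollary2p2 (R : realType) (X : Type) (p : X -> X -> R) (m : nat)
  (F : X -> set 'rV[R]_m) :
  is_metric p ->
  (forall x, F x !=set0) ->
  (forall x, mclosed (@euclid R m) (F x)) ->
  Sigma0 p 3 [set x | mv_continuous_at p (@euclid R m) F x] /\
  ((forall x, mbounded (@euclid R m) (F x)) ->
   Pi0 p 2 [set x | mv_continuous_at p (@euclid R m) F x]).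
Proof.
move=> pm _ clF.
have pxx : forall x, p x x = 0 by move: pm => [_ [pE _]] x; apply/(proj2 (pE x x)).
split.
- pose O (N n : nat) := [set x | exists2 y : 'rV[R]_m,
      (fun y => forall i, - N%:R <= y ord0 i <= N%:R) y & IU p F y (n.+1%:R^-1) x].
  apply: (@Sigma0_succ _ _ _ 2 _ (fun N => \bigcap_(n in setT) O N n)) => //.
  + apply/seteqP; split => x /=.
    * move=> [y Fxy Hy].
      have s0 : 0 <= \sum_i `|y ord0 i| by apply: sumr_ge0.
      exists (Num.Def.archi_bound (\sum_i `|y ord0 i|)) => // n _.
      exists y; last exact: cont_IU.
      move=> i; rewrite -ler_norml; apply: ltW; apply: le_lt_trans (archi_boundP s0).
      by rewrite (bigD1 i) //= lerDl; apply: sumr_ge0.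
    * move=> [N _ HN]; apply: (key pm clF x (fun=> - N%:R) (fun=> N%:R)).
      by move=> n; apply: HN.
  + move=> N; exists 2%N; split => //.
    rewrite setC_bigcap.
    apply: (@Sigma0_succ _ _ _ 1 _ (fun n => ~` O N n)) => // n.
    exists 1%N; split => //; rewrite setCK; apply: Sigma0_open; exact: O_open.
- move=> bF.
  pose O (n : nat) := [set x | exists2 y : 'rV[R]_m,
      (fun _ => True) y & IU p F y (n.+1%:R^-1) x].
  have -> : [set x | mv_continuous_at p (@euclid R m) F x] = \bigcap_(n in setT) O n.
    apply/seteqP; split => x /=.
    * move=> [y Fxy Hy] n _; exists y => //; exact: cont_IU.
    * move=> HO.
      have [x0 [M HM]] := bF x.
      apply: (key pm clF x (fun i => x0 ord0 i - (1 + M))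
                         (fun i => x0 ord0 i + (1 + M))) => n.
      have [y _ IUy] := HO n I; exists y => // i.
      have [d d0 Hd] := IUy.
      have [w Fw yw] := Hd x ltac:(by rewrite pxx).
      rewrite -ler_distlC.
      have -> : x0 ord0 i - y ord0 i = (x0 ord0 i - w ord0 i) + (w ord0 i - y ord0 i).
        by rewrite addrA subrK.
      apply: le_trans (ler_normD _ _) _.
      rewrite addrC lerD //.
        rewrite distrC; apply: le_trans (euclid_coord y w i) _; apply: ltW.
        apply: lt_le_trans yw _; rewrite invr_le1 ?ler1n ?unitfE ?pnatr_eq0 //.
      exact: le_trans (euclid_coord x0 w i) (HM w Fw).
  rewrite /Pi0 setC_bigcap.
  apply: (@Sigma0_succ _ _ _ 1 _ (fun n => ~` O n)) => // n.
  exists 1%N; split => //; rewrite setCK; apply: Sigma0_open; exact: O_open.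
Qed.
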